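(* Let $f:\mathbb{R}^n\to\mathbb{R}$ be continuous with bounded lower-level sets, and let $\gamma_k>0$, $\delta_k>0$ with $\gamma_k\delta_k\le c$ for all $k$ and some $c>0$. Then, for arbitrary $\hat x\in X$, all $k$, and every $x_k^*\in X_k^*$, $$\mathrm{dist}(x_k^*,X)\le\frac{m\beta}{\gamma_k}\big(f(\hat x)-f(x_k^* )\big)+\frac{m\beta\,\delta_k}{4\alpha_{\min}}.$$ In particular, if $\gamma_k\to\infty$ and $\delta_k\to0$, then $\lim_{k\to\infty}\mathrm{dist}(x_k^*,X)=0$, with convergence rate of order $O(\gamma_k^{-1}+\delta_k)$.
   Context: Let $a_1,\dots,a_m\in\mathbb{R}^n$ be nonzero vectors and $b_1,\dots,b_m\in\mathbb{R}$; $X_i=\{x:\langle a_i,x\rangle-b_i\le0\}$, $X=\bigcap_{i=1}^mX_i$ (assumed nonempty), $\alpha_{\min}=\min_i\|a_i\|$, and $\mathrm{dist}(x,Y)$ is the Euclidean distance from $x$ to $Y$. $\beta>0$ is a Hoffman constant: a scalar such that $\beta\sum_{i=1}^m\mathrm{dist}(x,X_i)\ge\mathrm{dist}(x,X)$ for all $x\in\mathbb{R}^n$ (such a scalar exists). For $\delta>0$, nonzero $a$ and scalar $b$: $h_\delta(x;a,b)=\frac{\langle a,x\rangle-b}{\|a\|}$ if $\langle a,x\rangle-b>\delta$, $\frac{(\langle a,x\rangle-b+\delta)^2}{4\delta\|a\|}$ if $-\delta\le\langle a,x\rangle-b\le\delta$, $0$ if $\langle a,x\rangle-b<-\delta$.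 For each $k$, $F_k(x)=f(x)+\frac{\gamma_k}{m}\sum_{i=1}^m h_{\delta_k}(x;a_i,b_i)$, and $X_k^*$ is the set of minimizers of $F_k$ over $\mathbb{R}^n$. *)

(* Defs.v *)
From HB Require Import structures.
From mathcomp Require Import all_boot all_order all_algebra.
From mathcomp Require Import all_classical all_reals all_analysis.
Set Implicit Arguments. Unset Strict Implicit. Unset Printing Implicit Defensive.
Import Order.TTheory GRing.Theory Num.Theory.
Import numFieldNormedType.Exports.
Local Open Scope classical_set_scope.
Local Open Scope ring_scope.

Section Defs.
Variables (R : realType) (n : nat).

Definition dotv (u v : 'rV[R]_n) : R := \sum_(i < n) u ord0 i * v ord0 i.
Definition eucl_norm (u : 'rV[R]_n) : R := Num.sqrt (dotv u u).

Definition setdist (x : 'rV[R]_n) (Y : set 'rV[R]_n) : R :=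
  inf [set eucl_norm (x - y) | y in Y].

Definition halfspace (a : 'rV[R]_n) (b : R) : set 'rV[R]_n :=
  [set x | dotv a x - b <= 0].

Definition hdelta (delta : R) (a : 'rV[R]_n) (b : R) (x : 'rV[R]_n) : R :=
  let t := dotv a x - b in
  if delta < t then t / eucl_norm a
  else if - delta <= t then (t + delta) ^+ 2 / (4 * delta * eucl_norm a)
  else 0.

Definition bounded_lower_level_sets (f : 'rV[R]_n -> R) : Prop :=
  forall t : R, exists M : R, forall x, f x <= t -> eucl_norm x <= M.

End Defs.

Section Problem.
Variables (R : realType) (n m : nat)
  (a : 'I_m -> 'rV[R]_n) (b : 'I_m -> R).

Definition Xi (i : 'I_m) : set 'rV[R]_n := halfspace (a i) (b i).
Definition Xfeas : set 'rV[R]_n := [set x | forall i, Xi i x].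
Definition alpha_min : R := inf [set eucl_norm (a i) | i in [set: 'I_m]].

Definition is_hoffman (beta : R) : Prop :=
  0 < beta /\
  forall x : 'rV[R]_n, beta * (\sum_(i < m) setdist x (Xi i)) >= setdist x Xfeas.

Definition Fk (f : 'rV[R]_n -> R) (gamma delta : nat -> R) (k : nat)
  (x : 'rV[R]_n) : R :=
  f x + gamma k / m%:R * \sum_(i < m) hdelta (delta k) (a i) (b i) x.

Definition Xkstar (f : 'rV[R]_n -> R) (gamma delta : nat -> R) (k : nat)
  : set 'rV[R]_n :=
  [set x | forall y, Fk f gamma delta k x <= Fk f gamma delta k y].
End Problem.

(* Main.v *)
Require Import Defs.
From HB Require Import structures.
From mathcomp Require Import all_boot all_order all_algebra.
From mathcomp Require Import all_classical all_reals all_analysis.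
From mathcomp Require Import ring lra.
Import Order.TTheory GRing.Theory Num.Theory.
Import numFieldNormedType.Exports.
Local Open Scope classical_set_scope.
Local Open Scope ring_scope.

Lemma ltrDl_1 (R : realType) (B : R) : B < B + 1. Proof. by rewrite ltrDl. Qed.
Section H.
Variables (R : realType) (n : nat).

Lemma dotv_ge0 (u : 'rV[R]_n) : 0 <= dotv u u.
Proof. by apply: sumr_ge0 => i _; rewrite -expr2 sqr_ge0. Qed.

Lemma eucl_norm_ge0 (u : 'rV[R]_n) : 0 <= eucl_norm u.
Proof. exact: sqrtr_ge0. Qed.

Lemma eucl_norm_sq (u : 'rV[R]_n) : eucl_norm u ^+ 2 = dotv u u.
Proof. by rewrite /eucl_norm sqr_sqrtr // dotv_ge0. Qed.

Lemma coord_le_norm (u : 'rV[R]_n) i : `|u ord0 i| <= eucl_norm u.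
Proof.
rewrite /eucl_norm -(sqrtr_sqr (u ord0 i)) ler_wsqrtr //.
rewrite /dotv (bigD1 i) //= -expr2 lerDl.
by apply: sumr_ge0 => j _; rewrite -expr2 sqr_ge0.
Qed.

Lemma f_lbound (f : 'rV[R]_n -> R) : continuous f ->
  bounded_lower_level_sets f -> exists L, forall x, L <= f x.
Proof.
move=> fc fb.
have [M HM] := fb (f 0).
pose K := [set v : 'rV[R]_n | forall i, [set` `[- M, M]] (v ord0 i)].
have Kc : compact K by exact (@rV_compact R n (fun i => [set` `[- M, M]]) (fun i => @segment_compact R (- M) M)).
have fK : compact (f @` K).
  by apply: continuous_compact => //; exact: continuous_subspaceT.
have [B [_ HB]] := compact_bounded fK.
exists (- (B + 1)) => x.
have [lt|le] := ltrP (f 0) (f x).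
  have : K 0.
    move=> i; rewrite /= in_itv /= mxE.
    have := HM 0 (lexx _); have := eucl_norm_ge0 0; lra.
  move=> K0; have := HB (B + 1) (ltrDl_1 _ B) (f 0) (ex_intro2 _ _ 0 K0 erefl).
  rewrite /= => /ler_normlP [H1 H2]; lra.
have Kx : K x.
  move=> i; rewrite /= in_itv /=.
  have := HM x le; have := coord_le_norm x i; move/ler_normlP => [? ?]. 
  by move=> ?; apply/andP; split; lra.
have := HB (B + 1) (ltrDl_1 _ B) (f x) (ex_intro2 _ _ x Kx erefl).
rewrite /= => /ler_normlP [H1 H2]; lra.
Qed.

Lemma eucl_norm0 : eucl_norm (0 : 'rV[R]_n) = 0.
Proof.
rewrite /eucl_norm /dotv big1 ?sqrtr0 // => i _; by rewrite mxE mulr0.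
Qed.

Lemma dotv_sub (a x : 'rV[R]_n) s : dotv a (x - s *: a) = dotv a x - s * dotv a a.
Proof.
rewrite /dotv mulr_sumr -sumrB; apply: eq_bigr => i _.
rewrite !mxE; ring.
Qed.

Lemma eucl_normZ (a : 'rV[R]_n) s : eucl_norm (s *: a) = `|s| * eucl_norm a.
Proof.
rewrite /eucl_norm -sqrtr_sqr -sqrtrM ?sqr_ge0 //; congr Num.sqrt.
rewrite /dotv mulr_sumr; apply: eq_bigr => i _; rewrite !mxE; ring.
Qed.

Lemma eucl_norm_gt0 (a : 'rV[R]_n) : a != 0 -> 0 < eucl_norm a.
Proof.
move=> a0; have [i ai] : exists i, a ord0 i != 0.
  apply: contrapT => H; move/eqP: a0; apply; apply/rowP => i.
  rewrite mxE; case: (eqVneq (a ord0 i) 0) => // ne; exfalso; apply: H; by exists i.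
by apply: lt_le_trans (coord_le_norm a i); rewrite normr_gt0.
Qed.

Lemma setdist_half (a x : 'rV[R]_n) b d : a != 0 -> 0 < d ->
  setdist x (halfspace a b) <= hdelta d a b x.
Proof.
move=> a0 d0; have na := eucl_norm_gt0 _ a0.
have lb : has_lbound [set eucl_norm (x - y) | y in halfspace a b].
  by exists 0 => _ [y _ <-]; exact: eucl_norm_ge0.
have [tle|tgt] := lerP (dotv a x - b) 0.
  apply: (@le_trans _ _ 0).
    apply: (ge_inf lb); exists x => //.
    by rewrite subrr eucl_norm0.
  rewrite /hdelta; case: ifP => [dt|_]; first lra.
  case: ifP => _ //; apply: divr_ge0; first exact: sqr_ge0.
  by rewrite !mulr_ge0 ?ltW.
apply: (@le_trans _ _ ((dotv a x - b) / eucl_norm a)).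
  apply: (ge_inf lb).
  have d1 : 0 < dotv a a by rewrite -eucl_norm_sq exprn_gt0.
  exists (x - ((dotv a x - b) / dotv a a) *: a).
    rewrite /halfspace /= dotv_sub mulfVK ?gt_eqF //; lra.
  rewrite opprB addrC subrK eucl_normZ ger0_norm; last first.
    by rewrite divr_ge0 ?ltW.
  by rewrite -eucl_norm_sq; field; rewrite gt_eqF.
move: tgt; rewrite /hdelta; set t := dotv a x - b => tgt.
case: ifP => [dt|_]; first by [].
case: ifP => [dt|/negbT]; last first.
  rewrite -ltNge => tl; lra.
rewrite invfM mulrA ler_pM2r ?invr_gt0 //.
rewrite ler_pdivlMr; last lra.
have := sqr_ge0 (t - d); nra.
Qed.

Lemma hdelta_le (a x : 'rV[R]_n) b d : a != 0 -> 0 < d ->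
  dotv a x - b <= 0 -> hdelta d a b x <= d / (4 * eucl_norm a).
Proof.
move=> a0 d0 t0; have na := eucl_norm_gt0 _ a0.
move: t0; rewrite /hdelta; set t := dotv a x - b => t0.
case: ifP => [dt|_]; first lra.
case: ifP => [dt|_]; last by rewrite divr_ge0 ?mulr_ge0 ?ltW.
rewrite ler_pdivrMr; last by rewrite !mulr_gt0 //; lra.
have -> : d / (4 * eucl_norm a) * (4 * d * eucl_norm a) = d ^+ 2.
  by field; rewrite gt_eqF.
nra.
Qed.

Lemma setdist_ge0 (x : 'rV[R]_n) Y : Y !=set0 -> 0 <= setdist x Y.
Proof.
move=> [y Yy]; apply: lb_le_inf; first by exists (eucl_norm (x - y)), y.
by move=> _ [z _ <-]; exact: eucl_norm_ge0.
Qed.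
End H.

Lemma alg (R : realType) (mm g be A de S H H0 F0 F1 D : R) :
  0 < mm -> 0 < g -> 0 <= be -> 0 < A -> D <= be * S -> S <= H ->
  H0 <= mm * (de / (4 * A)) -> F1 + g / mm * H <= F0 + g / mm * H0 ->
  D <= mm * be / g * (F0 - F1) + mm * be * de / (4 * A).
Proof.
move=> mm0 g0 be0 A0 hD hSH hH0 hmin.
have u0 : 0 < g / mm by rewrite divr_gt0.
have hp : H - H0 <= (F0 - F1) / (g / mm).
  rewrite ler_pdivlMr // mulrC; lra.
have hS : S <= mm * (de / (4 * A)) + (F0 - F1) / (g / mm) by lra.
apply: (le_trans hD); apply: (le_trans (ler_wpM2l be0 hS)).
rewrite le_eqVlt; apply/orP; left; apply/eqP.
field; rewrite ?gt_eqF //; lra.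
Qed.

Section P.
Variables (R : realType) (n m : nat) (a : 'I_m -> 'rV[R]_n) (b : 'I_m -> R).

Lemma alpha_le i : alpha_min a <= eucl_norm (a i).
Proof.
apply: ge_inf; last by exists i.
by exists 0 => _ [j _ <-]; exact: eucl_norm_ge0.
Qed.

Lemma alpha_gt0 : (0 < m)%N -> (forall i, a i != 0) -> 0 < alpha_min a.
Proof.
move=> m0 Ha.
pose e := \big[Order.min/1]_(i < m) eucl_norm (a i).
apply: (@lt_le_trans _ _ e).
  apply: (big_ind (fun x => 0 < x)) => //.
    by move=> x y x0 y0; rewrite lt_min x0 y0.
  by move=> i _; exact: eucl_norm_gt0.
apply: lb_le_inf; first by exists (eucl_norm (a (Ordinal m0))), (Ordinal m0).
move=> _ [i _ <-]; rewrite /e (bigD1 i) //= ge_min lexx //.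
Qed.
End P.

Theorem proposition5 (R : realType) (n m : nat)
  (a : 'I_m -> 'rV[R]_n) (b : 'I_m -> R)
  (Ha : forall i, a i != 0)
  (HX : Xfeas a b !=set0)
  (beta : R) (Hbeta : is_hoffman a b beta)
  (f : 'rV[R]_n -> R) (Hfc : continuous f)
  (Hfb : bounded_lower_level_sets f)
  (gamma delta : nat -> R) (c : R) (Hc : 0 < c)
  (Hgamma : forall k, 0 < gamma k) (Hdelta : forall k, 0 < delta k)
  (Hgd : forall k, gamma k * delta k <= c) :
  (forall xhat, Xfeas a b xhat -> forall k xk, Xkstar a b f gamma delta k xk ->
     setdist xk (Xfeas a b) <=
       m%:R * beta / gamma k * (f xhat - f xk)
       + m%:R * beta * delta k / (4 * alpha_min a)) /\
  (exists C : R, forall k xk, Xkstar a b f gamma delta k xk ->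
     setdist xk (Xfeas a b) <= C * ((gamma k)^-1 + delta k)) /\
  (gamma @ \oo --> +oo -> delta @ \oo --> 0 ->
   forall xs : nat -> 'rV[R]_n,
     (forall k, Xkstar a b f gamma delta k (xs k)) ->
     (fun k => setdist (xs k) (Xfeas a b)) @ \oo --> 0).
Proof.
have [be0 Hhof] := Hbeta.
have P1 : forall xhat, Xfeas a b xhat -> forall k xk, Xkstar a b f gamma delta k xk ->
     setdist xk (Xfeas a b) <=
       m%:R * beta / gamma k * (f xhat - f xk)
       + m%:R * beta * delta k / (4 * alpha_min a).
  move=> xhat Xhat k xk Hxk.
  have [m0|mpos] := posnP m.
    have S0 : \sum_(i < m) setdist xk (Xi a b i) = 0.
      by apply: big1 => i; have := ltn_ord i; rewrite {2}m0.
    have mm0 : m%:R = 0 :> R by rewrite m0.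
    have := Hhof xk; rewrite S0 mulr0 mm0 !mul0r addr0 => //.
  have al0 := @alpha_gt0 _ _ _ a mpos Ha.
  apply: (@alg R m%:R (gamma k) beta (alpha_min a) (delta k)
     (\sum_(i < m) setdist xk (Xi a b i))
     (\sum_(i < m) hdelta (delta k) (a i) (b i) xk)
     (\sum_(i < m) hdelta (delta k) (a i) (b i) xhat) (f xhat) (f xk)).
  - by rewrite ltr0n.
  - exact: Hgamma.
  - exact: ltW.
  - exact: al0.
  - exact: Hhof.
  - by apply: ler_sum => i _; apply: setdist_half; [exact: Ha | exact: Hdelta].
  - have -> : m%:R * (delta k / (4 * alpha_min a)) = \sum_(i < m) (delta k / (4 * alpha_min a)).
      by rewrite sumr_const card_ord mulr_natl.
    apply: ler_sum => i _.
    apply: (le_trans (@hdelta_le _ _ _ _ _ _ (Ha i) (Hdelta k) (Xhat i))).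
    rewrite ler_pM2l ?Hdelta // lef_pV2 ?posrE ?mulr_gt0 ?eucl_norm_gt0 //.
    by rewrite ler_pM2l // alpha_le.
  - exact: Hxk.
have [L HL] := @f_lbound _ _ f Hfc Hfb.
have P2 : exists C : R, forall k xk, Xkstar a b f gamma delta k xk ->
     setdist xk (Xfeas a b) <= C * ((gamma k)^-1 + delta k).
  have [xhat Xhat] := HX.
  exists (m%:R * beta * `|f xhat - L| + m%:R * beta / (4 * alpha_min a)).
  move=> k xk Hxk; apply: (le_trans (P1 xhat Xhat k xk Hxk)).
  have [m0|mpos] := posnP m.
    have mm0 : m%:R = 0 :> R by rewrite m0.
    by rewrite mm0 !mul0r addr0 mul0r.
  have al0 := @alpha_gt0 _ _ _ a mpos Ha.
  have u0 : 0 <= m%:R * beta by rewrite mulr_ge0 ?ler0n ?ltW.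
  have g0 := Hgamma k; have d0 := Hdelta k.
  have v0 : 0 < (gamma k)^-1 by rewrite invr_gt0.
  have q0 : 0 < (4 * alpha_min a)^-1 by rewrite invr_gt0 mulr_gt0.
  have hD : f xhat - f xk <= `|f xhat - L|.
    apply: le_trans (ler_norm _); have := HL xk; lra.
  have e1 : m%:R * beta / gamma k * (f xhat - f xk) <= m%:R * beta / gamma k * `|f xhat - L|.
    by apply: ler_wpM2l => //; rewrite mulr_ge0 // ltW.
  have e2 : 0 <= m%:R * beta * `|f xhat - L| * delta k.
    by rewrite !mulr_ge0 // ltW.
  have e3 : 0 <= m%:R * beta / (4 * alpha_min a) * (gamma k)^-1.
    by rewrite !mulr_ge0 // ltW.
  have E1 : m%:R * beta * delta k / (4 * alpha_min a) = m%:R * beta / (4 * alpha_min a) * delta k.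
    by rewrite mulrAC.
  have E2 : (m%:R * beta * `|f xhat - L| + m%:R * beta / (4 * alpha_min a)) * ((gamma k)^-1 + delta k)
     = m%:R * beta / gamma k * `|f xhat - L| + m%:R * beta * `|f xhat - L| * delta k
       + m%:R * beta / (4 * alpha_min a) * (gamma k)^-1 + m%:R * beta / (4 * alpha_min a) * delta k.
    by ring.
  rewrite E1 E2; lra.
split => //; split => //.
move=> gi d0 xs Hxs.
have [C HC] := P2.
apply: (@squeeze_cvgr _ _ _ _ (fun=> 0) (fun k => C * ((gamma k)^-1 + delta k))).
- near=> k; apply/andP; split; last exact: HC.
  by apply: setdist_ge0.
- exact: cvg_cst.
- rewrite -[X in _ --> X](mulr0 C) -[X in _ --> C * X](addr0 0).
  apply: cvgMl_tmp; apply: cvgD => //.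
  apply/gtr0_cvgV0 => //; by near=> k.
Unshelve. all: end_near.
Qed.
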